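(* Let $n\ge3$, $\beta=\frac n{n-2}$ and $\xi(x)=\prod_{i=0}^\infty\left(1+\frac{\beta^i}{\sqrt{2\beta^i-1}}x\right)^{\beta^{-i}}$. Then (i) $\xi(x)\le(1+x)^n$ for every $x\ge0$; (ii) $\xi(x)\le(4e)^{n/4}x^{n/2}$ for every $x\ge1$. *)

(* Defs.v *)
From Stdlib Require Import Reals.
Open Scope R_scope.

Definition beta (n : nat) : R := INR n / (INR n - 2).

Definition xi_factor (n i : nat) (x : R) : R :=
  Rpower (1 + (beta n ^ i / sqrt (2 * beta n ^ i - 1)) * x) (/ (beta n ^ i)).

Fixpoint xi_partial (n N : nat) (x : R) : R :=
  match N with
  | O => xi_factor n 0 x
  | S M => xi_partial n M x * xi_factor n (S M) x
  end.

Definition xi_is (n : nat) (x l : R) : Prop :=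
  Un_cv (fun N => xi_partial n N x) l.

(* Main.v *)
Require Import Defs.
From Stdlib Require Import Reals.
From Stdlib Require Import Lra Lia.
Open Scope R_scope.

Lemma exp_le' x y : x <= y -> exp x <= exp y.
Proof. intro h; destruct (Rle_lt_or_eq_dec _ _ h) as [h'|h'].
  - left; now apply exp_increasing.
  - subst; lra. Qed.

Lemma ln_le' x y : 0 < x -> x <= y -> ln x <= ln y.
Proof. intros hx h; destruct (Rle_lt_or_eq_dec _ _ h) as [h'|h'].
  - left; now apply ln_increasing.
  - subst; lra. Qed.

Lemma ln_le_sub1 y : 0 < y -> ln y <= y - 1.
Proof. intro hy. pose proof (exp_ineq1_le (ln y)). rewrite exp_ln in H; lra. Qed.

Lemma key_i c x : 1 <= c -> 0 <= x -> ln (1 + c * x) <= c * ln (1 + x).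
Proof.
  intros hc hx. set (m := 1 + x).
  assert (hm : 0 < m) by (unfold m; lra).
  assert (hcx : 0 < 1 + c * x) by nra.
  assert (e1 : ln ((1 + c*x) * / m) = ln (1 + c*x) + ln (/ m))
    by (apply ln_mult; [lra | apply Rinv_0_lt_compat; lra]).
  rewrite ln_Rinv in e1 by lra.
  pose proof (ln_le_sub1 ((1 + c*x) * / m)) as h1.
  assert (0 < (1 + c*x) * / m) by (apply Rmult_lt_0_compat; [lra | apply Rinv_0_lt_compat; lra]).
  specialize (h1 H).
  pose proof (ln_le_sub1 (/ m)) as h2.
  rewrite ln_Rinv in h2 by lra.
  specialize (h2 (Rinv_0_lt_compat _ hm)).
  assert (eq : (1 + c*x) * / m - 1 = (c-1) * (x * / m)) by (unfold m; field; lra).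
  assert (eq2 : / m - 1 = - (x * / m)) by (unfold m; field; lra).
  assert ((c-1) * (x * / m) <= (c-1) * ln m) by (apply Rmult_le_compat_l; lra).
  lra.
Qed.

Lemma div_ge1 b d : 0 < d -> d <= b -> 1 <= b / d.
Proof. intros hd h. unfold Rdiv. apply Rmult_le_reg_r with d; auto.
  rewrite Rmult_assoc, Rinv_l, Rmult_1_r, Rmult_1_l; lra. Qed.

Section Facts.
Variable n : nat.
Hypothesis hn : (3 <= n)%nat.

Lemma INR_ge3 : 3 <= INR n.
Proof. replace 3 with (INR 3) by (simpl; ring). apply le_INR; exact hn. Qed.

Lemma beta_ge1 : 1 <= beta n.
Proof. pose proof INR_ge3. unfold beta. apply div_ge1; lra. Qed.

Lemma beta_pos : 0 < beta n.
Proof. pose proof beta_ge1; lra. Qed.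

Lemma inv_beta : / beta n = (INR n - 2) / INR n.
Proof. pose proof INR_ge3. unfold beta. field. lra. Qed.

Lemma ln_beta : ln (beta n) <= 2 / (INR n - 2).
Proof. pose proof INR_ge3. pose proof (ln_le_sub1 (beta n) beta_pos).
  replace (beta n - 1) with (2 / (INR n - 2)) in H0 by (unfold beta; field; lra). lra. Qed.

Lemma ln_beta_ge0 : 0 <= ln (beta n).
Proof. rewrite <- ln_1. apply ln_le'; [lra| apply beta_ge1]. Qed.

Lemma b_ge1 i : 1 <= beta n ^ i.
Proof. apply pow_R1_Rle, beta_ge1. Qed.

Lemma sqrt_facts i : let b := beta n ^ i in
  0 < sqrt b /\ sqrt b <= sqrt (2*b-1) /\ sqrt (2*b-1) <= b.
Proof. intro b. pose proof (b_ge1 i) as hb. fold b in hb. split; [|split].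
  - apply sqrt_lt_R0; lra.
  - apply sqrt_le_1_alt; lra.
  - rewrite <- (sqrt_square b) at 2 by lra. apply sqrt_le_1_alt; nra. Qed.

Lemma c_ge1 i : let b := beta n ^ i in 1 <= b / sqrt (2*b-1).
Proof. intro b. destruct (sqrt_facts i) as [h1 [h2 h3]]. fold b in h1,h2,h3.
  apply div_ge1; lra. Qed.

Lemma inv_b_c i : let b := beta n ^ i in
  / b * (b / sqrt (2*b-1)) <= (/ sqrt (beta n)) ^ i.
Proof. intro b. destruct (sqrt_facts i) as [h1 [h2 h3]]. fold b in h1,h2,h3.
  pose proof (b_ge1 i) as hb. fold b in hb.
  replace (/ b * (b / sqrt (2*b-1))) with (/ sqrt (2*b-1)) by (field; lra).
  assert (e : (/ sqrt (beta n)) ^ i = / sqrt b).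
  { rewrite pow_inv. f_equal. unfold b. clear -hn. induction i.
    - simpl. now rewrite sqrt_1.
    - simpl. rewrite sqrt_mult; [now rewrite IHi| pose proof beta_pos; lra |].
      pose proof (b_ge1 i); lra. }
  rewrite e. apply Rinv_le_contravar; lra. Qed.

Lemma c_sq i : let b := beta n ^ i in
  (b / sqrt (2*b-1)) * (b / sqrt (2*b-1)) <= b.
Proof. intro b. destruct (sqrt_facts i) as [h1 [h2 h3]]. fold b in h1,h2,h3.
  pose proof (b_ge1 i) as hb. fold b in hb.
  replace ((b / sqrt (2*b-1)) * (b / sqrt (2*b-1))) with (b * b / (sqrt (2*b-1) * sqrt (2*b-1))) by (field; lra).
  rewrite sqrt_sqrt by lra.
  apply Rmult_le_reg_r with (2*b-1); [lra|]. unfold Rdiv.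
  rewrite Rmult_assoc, Rinv_l by lra. nra. Qed.

Lemma s_bounds : let s := / sqrt (beta n) in 0 <= s /\ s <= 1 - / INR n.
Proof. intro s. pose proof INR_ge3. split.
  - unfold s. left. apply Rinv_0_lt_compat, sqrt_lt_R0, beta_pos.
  - unfold s. rewrite <- sqrt_inv. rewrite inv_beta.
    rewrite <- (sqrt_square (1 - / INR n)).
    2:{ assert (/ INR n <= / 3) by (apply Rinv_le_contravar; lra). lra. }
    apply sqrt_le_1_alt.
    replace ((1 - / INR n) * (1 - / INR n)) with ((INR n - 2)/INR n + / INR n * / INR n) by (field; lra).
    assert (0 <= / INR n * / INR n) by (apply Rmult_le_pos; left; apply Rinv_0_lt_compat; lra). lra.
Qed.

Lemma sum_s_le N : sum_f_R0 (fun i => (/ sqrt (beta n)) ^ i) N <= INR n.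
Proof. destruct s_bounds as [h1 h2]. pose proof INR_ge3.
  set (s := / sqrt (beta n)) in *.
  assert (/ INR n > 0) by (apply Rinv_0_lt_compat; lra).
  rewrite tech3 by lra.
  assert (0 <= s ^ S N) by (apply pow_le; lra).
  apply Rmult_le_reg_r with (1 - s); [lra|]. unfold Rdiv.
  rewrite Rmult_assoc, Rinv_l by lra.
  assert (INR n * (1 - s) >= INR n * / INR n) by (apply Rmult_ge_compat_l; lra).
  rewrite Rinv_r in H2 by lra. lra. Qed.

Lemma sum_q_le N : sum_f_R0 (fun i => (/ beta n) ^ i) N <= INR n / 2.
Proof. pose proof INR_ge3. rewrite inv_beta.
  set (q := (INR n - 2) / INR n).
  assert (hq : 1 - q = 2 / INR n) by (unfold q; field; lra).
  assert (0 <= q) by (unfold q; apply Rmult_le_pos; [lra| left; apply Rinv_0_lt_compat; lra]).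
  rewrite tech3 by (intro e; rewrite e in hq; assert (2 / INR n > 0) by (apply Rdiv_lt_0_compat; lra); lra).
  assert (0 <= q ^ S N) by (apply pow_le; lra).
  rewrite hq. replace (INR n / 2) with (1 / (2 / INR n)) by (field; lra).
  unfold Rdiv. apply Rmult_le_compat_r; [left; apply Rinv_0_lt_compat; apply Rmult_lt_0_compat; [lra|apply Rinv_0_lt_compat; lra]| lra]. Qed.

Lemma sum_iq_eq q N : q <> 1 ->
  sum_f_R0 (fun i => INR i * q ^ i) N =
  (q - INR (S N) * q ^ (S N) + INR N * q ^ (S (S N))) / ((1 - q) * (1 - q)).
Proof. intro hq. assert (1 - q <> 0) by lra. induction N.
  - simpl. field. auto.
  - cbn [sum_f_R0]. rewrite IHN. rewrite !S_INR. cbn [pow]. field. auto. Qed.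

Lemma sum_iq_le N : sum_f_R0 (fun i => INR i * (/ beta n) ^ i) N <= INR n * (INR n - 2) / 4.
Proof. pose proof INR_ge3. rewrite inv_beta.
  set (q := (INR n - 2) / INR n).
  assert (hq : 1 - q = 2 / INR n) by (unfold q; field; lra).
  assert (0 <= q) by (unfold q; apply Rmult_le_pos; [lra| left; apply Rinv_0_lt_compat; lra]).
  assert (q <= 1) by (assert (2 / INR n > 0) by (apply Rdiv_lt_0_compat; lra); lra).
  rewrite sum_iq_eq by (intro e; rewrite e in hq; assert (2 / INR n > 0) by (apply Rdiv_lt_0_compat; lra); lra).
  replace (INR n * (INR n - 2) / 4) with (q / ((1-q)*(1-q))) by (rewrite hq; unfold q; field; lra).
  assert (0 < (1-q)*(1-q)) by (rewrite hq; assert (2 / INR n > 0) by (apply Rdiv_lt_0_compat; lra); nra).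
  unfold Rdiv. apply Rmult_le_compat_r; [left; now apply Rinv_0_lt_compat|].
  assert (0 <= q ^ S N) by (apply pow_le; lra).
  assert (0 <= INR N) by apply pos_INR.
  cbn [pow] in *. rewrite S_INR.
  assert (0 <= INR N * (q * q ^ N) * (1 - q)) by (apply Rmult_le_pos; [apply Rmult_le_pos|]; lra).
  nra. Qed.

End Facts.

Lemma factor_pos n i x : 0 < xi_factor n i x.
Proof. unfold xi_factor, Rpower. apply exp_pos. Qed.

Lemma partial_bound n x (a : nat -> R) :
  (forall i, xi_factor n i x <= exp (a i)) ->
  forall N, xi_partial n N x <= exp (sum_f_R0 a N).
Proof. intros h N. induction N.
  - simpl. apply h.
  - cbn [xi_partial sum_f_R0]. rewrite exp_plus.
    apply Rmult_le_compat; [|left; apply factor_pos|exact IHN|apply h].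
    clear IHN. induction N; [left; apply factor_pos|].
    cbn [xi_partial]. apply Rmult_le_pos; [exact IHN| left; apply factor_pos]. Qed.

Lemma partial_pos n x N : 0 <= xi_partial n N x.
Proof. induction N; [left; apply factor_pos|].
  cbn [xi_partial]. apply Rmult_le_pos; [exact IHN| left; apply factor_pos]. Qed.

Lemma lim_le (u : nat -> R) l B : Un_cv u l -> (forall N, u N <= B) -> l <= B.
Proof. intros hc hb. destruct (Rle_or_lt l B) as [h|h]; auto.
  destruct (hc (l - B)) as [N hN]; [lra|].
  specialize (hN N (Nat.le_refl N)). specialize (hb N).
  unfold Rdist in hN. apply Rabs_def2 in hN. lra. Qed.

Theorem lemmaB2 (n : nat) (hn : (3 <= n)%nat) :
  (forall x : R, 0 <= x ->
     exists l : R, xi_is n x l /\ l <= (1 + x) ^ n) /\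
  (forall x : R, 1 <= x ->
     exists l : R, xi_is n x l /\
       l <= Rpower (4 * exp 1) (INR n / 4) * Rpower x (INR n / 2)).
Proof.
  assert (B1 : forall x, 0 <= x -> forall N, xi_partial n N x <= (1 + x) ^ n).
  { intros x hx N.
    assert (hL : 0 <= ln (1 + x)) by (rewrite <- ln_1; apply ln_le'; lra).
    eapply Rle_trans.
    - apply (partial_bound n x (fun i => (/ sqrt (beta n)) ^ i * ln (1 + x))).
      intro i. unfold xi_factor, Rpower. apply exp_le'.
      pose proof (c_ge1 n hn i) as hc. pose proof (inv_b_c n hn i) as hbc.
      simpl in hc, hbc.
      set (b := beta n ^ i) in *. set (c := b / sqrt (2*b-1)) in *.
      pose proof (key_i c x hc hx).
      assert (0 < / b) by (apply Rinv_0_lt_compat; pose proof (b_ge1 n hn i); unfold b; lra).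
      apply Rle_trans with (/ b * (c * ln (1 + x))).
      + apply Rmult_le_compat_l; lra.
      + rewrite <- Rmult_assoc. apply Rmult_le_compat_r; lra.
    - rewrite <- scal_sum. rewrite <- Rpower_pow by lra. unfold Rpower.
      apply exp_le'. rewrite Rmult_comm. apply Rmult_le_compat_r; auto.
      apply sum_s_le; auto. }
  assert (CV : forall x, 0 <= x -> exists l, xi_is n x l /\ forall N, xi_partial n N x <= (1+x)^n).
  { intros x hx.
    assert (G : Un_growing (fun N => xi_partial n N x)).
    { intro N. cbn [xi_partial]. pose proof (partial_pos n x N).
      assert (1 <= xi_factor n (S N) x).
      { unfold xi_factor, Rpower. apply Rle_trans with (exp 0); [rewrite exp_0; lra|]. apply exp_le'.
        pose proof (c_ge1 n hn (S N)) as hc. pose proof (b_ge1 n hn (S N)) as hb.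
        cbv zeta in hc.
        set (b := beta n ^ S N) in *. set (c := b / sqrt (2*b-1)) in *.
        apply Rmult_le_pos.
        - left. apply Rinv_0_lt_compat. lra.
        - rewrite <- ln_1. apply ln_le'; [lra|]. nra. }
      nra. }
    destruct (growing_cv _ G) as [l hl].
    - exists ((1+x)^n). intros y [N ->]. apply B1; auto.
    - exists l; split; [exact hl| apply B1; auto]. }
  split.
  - intros x hx. destruct (CV x hx) as [l [hl hb]]. exists l; split; auto.
    apply (lim_le _ _ _ hl hb).
  - intros x hx. destruct (CV x ltac:(lra)) as [l [hl _]]. exists l; split; auto.
    apply (lim_le _ _ _ hl). intro N.
    pose proof (INR_ge3 n hn) as hn3.
    assert (hlx : 0 <= ln x) by (rewrite <- ln_1; apply ln_le'; lra).
    assert (hl4 : ln 4 = 2 * ln 2) by (replace 4 with (2*2) by ring; rewrite ln_mult by lra; ring).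
    assert (hl2 : 0 <= ln 2) by (rewrite <- ln_1; apply ln_le'; lra).
    eapply Rle_trans.
    + apply (partial_bound n x (fun i => (/ beta n) ^ i * (ln x + ln 2) +
                                         (ln (beta n) / 2) * (INR i * (/ beta n) ^ i))).
      intro i. unfold xi_factor, Rpower. apply exp_le'.
      pose proof (c_ge1 n hn i) as hc. pose proof (c_sq n hn i) as hcs.
      simpl in hc, hcs.
      pose proof (b_ge1 n hn i) as hb.
      set (b := beta n ^ i) in *. set (c := b / sqrt (2*b-1)) in *.
      rewrite pow_inv. fold b.
      assert (0 < / b) by (apply Rinv_0_lt_compat; lra).
      assert (hA : ln (1 + c * x) <= ln x + ln 2 + ln (beta n) / 2 * INR i).
      { apply Rle_trans with (ln (x * (2 * c))).
        - apply ln_le'; nra.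
        - rewrite ln_mult by lra. rewrite ln_mult by lra.
          assert (ln c <= ln (beta n) / 2 * INR i); [|lra].
          assert (2 * ln c <= ln b); [|unfold b in H0; rewrite ln_pow in H0 by (apply beta_pos; auto); lra].
          replace (2 * ln c) with (ln (c * c)) by (rewrite ln_mult by lra; ring).
          apply ln_le'; nra. }
      apply Rle_trans with (/ b * (ln x + ln 2 + ln (beta n) / 2 * INR i)).
      * apply Rmult_le_compat_l; lra.
      * right; ring.
    + assert (E : forall (u v : nat -> R) K M N,
          sum_f_R0 (fun i => u i * K + M * v i) N = K * sum_f_R0 u N + M * sum_f_R0 v N).
      { intros u v K M N0. induction N0; cbn [sum_f_R0]; [ring| rewrite IHN0; ring]. }
      rewrite E. unfold Rpower. rewrite <- exp_plus. apply exp_le'.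
      rewrite ln_mult by (pose proof exp_pos 1; lra). rewrite ln_exp, hl4.
      pose proof (sum_q_le n hn N) as hsq. pose proof (sum_iq_le n hn N).
      pose proof (ln_beta n hn). pose proof (ln_beta_ge0 n hn).
      assert (h1 : (ln x + ln 2) * sum_f_R0 (pow (/ beta n)) N <= (ln x + ln 2) * (INR n / 2))
        by (apply Rmult_le_compat_l; [lra| exact hsq]).
      assert (h2 : ln (beta n) / 2 * sum_f_R0 (fun i => INR i * (/ beta n) ^ i) N
                   <= (2 / (INR n - 2)) / 2 * (INR n * (INR n - 2) / 4)).
      { apply Rmult_le_compat; try lra.
        apply cond_pos_sum; intro k; apply Rmult_le_pos; [apply pos_INR| apply pow_le; left; apply Rinv_0_lt_compat; apply beta_pos; auto]. }
      replace ((2 / (INR n - 2)) / 2 * (INR n * (INR n - 2) / 4)) with (INR n / 4) in h2 by (field; lra).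
      lra.
Qed.
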